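(* For every integer $k > 1$, $\lfloor \log_2 (k-1) \rfloor \leq \operatorname{VCdim}(\mathcal{H}^k) \leq k$.
   Context: For $\sigma \in \{0,1\}^k$, let $h_\sigma$ be the classifier on binary strings with $h_\sigma(s) = 1$ iff $\sigma$ is a subsequence of $s$ (there exist indices $i_1 < \dots < i_k$ with $s_{i_j} = \sigma_j$), and $0$ otherwise. $\mathcal{H}^k = \{h_\sigma : \sigma \in \{0,1\}^k\}$, viewed as a hypothesis class on the set of all finite binary strings. A set $B$ of strings is shattered by $\mathcal{H}^k$ if for every $B' \subseteq B$ there is $h \in \mathcal{H}^k$ with $B \cap h^{-1}(1) = B'$; $\operatorname{VCdim}(\mathcal{H}^k)$ is the largest size of a shattered set. *)

(* Defs.v *)
From mathcomp Require Import all_boot.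
Set Implicit Arguments. Unset Strict Implicit. Unset Printing Implicit Defensive.

(* h_sigma(s) = 1 iff sigma is a (not necessarily contiguous) subsequence of s;
   mathcomp's [subseq] is exactly this notion. *)
Definition h (k : nat) (sigma : k.-tuple bool) (s : seq bool) : bool :=
  subseq sigma s.

Definition shattered (k : nat) (B : seq (seq bool)) : Prop :=
  uniq B /\
  forall B' : seq (seq bool), {subset B' <= B} ->
    exists sigma : k.-tuple bool,
      forall s, s \in B -> h sigma s = (s \in B').

Definition VCdim_ge (k d : nat) : Prop :=
  exists B, shattered k B /\ d <= size B.

Definition VCdim_le (k d : nat) : Prop :=
  forall B, shattered k B -> size B <= d.

(* Main.v *)
Require Import Defs.
From mathcomp Require Import all_boot.
From mathcomp Require Import zify.

Definition blocks (zs : seq nat) : seq bool :=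
  flatten [seq nseq z false ++ [:: true] | z <- zs].

Lemma sub_nseq b t : subseq (nseq b false) t = (b <= count_mem false t).
Proof.
elim: t b => [|x t IH] [|b] //=.
by case: x => /=; [rewrite (IH b.+1) add0n | rewrite IH add1n ltnS].
Qed.

Lemma count_blocks zs : count_mem false (blocks zs) = sumn zs.
Proof.
elim: zs => [|z zs IH] //=.
by rewrite count_cat /= IH count_cat /= addn0 count_nseq /= mul1n addn0.
Qed.

Lemma sub_skip z r t :
  subseq (true :: r) (nseq z false ++ true :: t) = subseq r t.
Proof. by elim: z. Qed.

Lemma key a b zs :
  subseq (nseq a true ++ nseq b false) (blocks zs)
  = (a <= size zs) && (b <= sumn (drop a zs)).
Proof.
elim: zs a => [|z zs IH] [|a].
- by rewrite cat0s sub_nseq.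
- by case: b.
- by rewrite cat0s sub_nseq count_blocks drop0.
- have -> : blocks (z :: zs) = nseq z false ++ true :: blocks zs by rewrite /blocks /= -catA.
  by rewrite sub_skip IH.
Qed.

Lemma bits d (P : nat -> bool) :
  exists a, a < 2 ^ d /\ forall i, i < d -> odd (a %/ 2 ^ i) = P i.
Proof.
elim: d P => [|d IH] P.
  by exists 0.
have [a [Ha Hb]] := IH (fun i => P i.+1).
exists (P 0 + 2 * a); split.
  rewrite expnS; case: (P 0) => /=; lia.
case=> [|i] Hi.
  by rewrite expn0 divn1 oddD oddM /= addbF; case: (P 0).
rewrite expnS divnMA.
have -> : (P 0 + 2 * a) %/ 2 = a.
  by rewrite mulnC divnDMl // divn_small ?addn0 //; case: (P 0).
exact: Hb.
Qed.

Lemma tele (T : nat -> nat) : (forall t, T t.+1 <= T t) ->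
  forall n a, T (a + n) <= T a /\
    sumn [seq T t - T t.+1 | t <- iota a n] = T a - T (a + n).
Proof.
move=> HT; elim=> [|n IH] a.
  by rewrite addn0 subnn.
have [H1 H2] := IH a.+1.
have H3 := HT a.
rewrite addSnnS in H1 H2.
split; first exact: leq_trans H1 H3.
rewrite /= H2; lia.
Qed.

Section Cons.
Variables (k d : nat).
Hypothesis hN : 2 ^ d <= k - 1.
Let N := 2 ^ d.

Definition T i t := if t < N then k - t.+1 + odd (t %/ 2 ^ i) else 0.
Definition S i := blocks [seq T i t - T i t.+1 | t <- iota 0 N].
Definition sig a := nseq a true ++ nseq (k - a) false.

Lemma T_mono i t : T i t.+1 <= T i t.
Proof.
rewrite /T; case: ltnP => h1; case: ltnP => h2 //; try lia.
Qed.

Lemma lab i a : a < N -> subseq (sig a) (S i) = odd (a %/ 2 ^ i).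
Proof.
move=> Ha; rewrite /sig /S key size_map size_iota (ltnW Ha) /=.
rewrite -map_drop drop_iota add0n.
have [_ ->] := @tele (T i) (T_mono i) (N - a) a.
have -> : a + (N - a) = N by lia.
rewrite /T Ha ltnn subn0.
have : a.+1 <= k - 1 by apply: leq_trans hN.
case: (odd _) => /= h; lia.
Qed.

End Cons.

Lemma lower k : 1 < k -> VCdim_ge k (trunc_log 2 (k - 1)).
Proof.
move=> hk.
set d := trunc_log 2 (k - 1).
have hN : 2 ^ d <= k - 1 by apply: trunc_logP => //; lia.
exists [seq S k d i | i <- iota 0 d]; split; last by rewrite size_map size_iota.
split.
  rewrite map_inj_in_uniq ?iota_uniq //.
  move=> i j; rewrite !mem_iota !add0n => /andP [_ Hi] /andP [_ Hj] Hij.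
  have [a [Ha Hb]] := bits d (fun t => t == i).
  have := Hb i Hi; rewrite eqxx -(lab _ _ hN) // Hij (lab _ _ hN) // Hb //.
  by move/eqP.
move=> B' sB'.
have [a [Ha Hb]] := bits d (fun t => S k d t \in B').
have sz : size (sig k a) == k.
  rewrite /sig size_cat !size_nseq; apply/eqP; lia.
exists (Tuple sz) => s /mapP [i]; rewrite mem_iota add0n => /andP [_ Hi] ->.
rewrite /h /= (lab _ _ hN) //; exact: Hb.
Qed.
Lemma upper k : VCdim_le k k.
Proof.
move=> B [uB shB].
set n := size B.
pose f := fun sigma : k.-tuple bool => [set i : 'I_n | h sigma (nth [::] B i)].
have sub : powerset [set: 'I_n] \subset [set f x | x in [set: k.-tuple bool]].
  apply/subsetP => A _.
  pose B' := [seq nth [::] B (val i) | i <- enum A].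
  have sB' : {subset B' <= B}.
    move=> x /mapP [i _ ->]; exact: mem_nth (ltn_ord i).
  have [sigma Hs] := shB B' sB'.
  apply/imsetP; exists sigma; first by rewrite inE.
  apply/setP => i; rewrite inE Hs ?mem_nth //.
  rewrite /B' (mem_map (f := fun i : 'I_n => nth [::] B (val i))) ?mem_enum //.
  move=> x y /eqP; rewrite nth_uniq ?ltn_ord // => /eqP; exact: val_inj.
have := subset_leq_card sub.
rewrite card_powerset cardsT card_ord.
move/leq_trans => /(_ _ (leq_imset_card _ _)).
rewrite cardsT card_tuple card_bool.
by rewrite leq_exp2l.
Qed.

Theorem mainTheorem11 (k : nat) (hk : 1 < k) :
  VCdim_ge k (trunc_log 2 (k - 1)) /\ VCdim_le k k.
Proof. split; [exact: lower | exact: upper]. Qed.
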